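(* Let $d\ge1$. There exist $C>0$ and $N\in\mathbb{N}$ such that $\mathrm{ex}(n,\mathcal{F}_d)\ge C\,n^{\,d+1-\frac{2(d+1)}{3^{d+1}-1}}$ for all $n\ge N$.
   Context: A $k$-graph is a hypergraph whose edges are all $k$-element subsets of a finite vertex set. A $k$-graph is $\mathcal{F}$-free if it has no subhypergraph isomorphic to a member of $\mathcal{F}$; $\mathrm{ex}(n,\mathcal{F})$ is the maximum number of edges of an $\mathcal{F}$-free $k$-graph on $n$ vertices. A simplicial complex is a nonempty family of subsets of a finite vertex set closed under subsets; $\dim F=|F|-1$. A complex $K$ with vertex set identified with a subset of $[n]$ is nice on $[n]$ if for every $F\subseteq[n]$ exactly one of $F$, $[n]\setminus F$ lies in $K$. The join $K_1*K_2$ has vertex set $V(K_1)\sqcup V(K_2)$ and simplices $F_1\sqcup F_2$ with $F_i\in K_i$. For a $d$-dimensional complex $K$, $(K)^d$ is the $(d+1)$-graph on $V(K)$ whose edges are the $d$-simplices of $K$. $\mathcal{F}_d$ is the family of $(d+1)$-graphs $(K_1*\cdots*K_s)^d$ where $s\ge1$, each $K_i$ is nice on $[n_i]$, $\dim(K_1*\cdots*K_s)=d$, and $n_1+\cdots+n_s=2d+s+2$. *)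

(* Defs.v *)
From Stdlib Require Import ClassicalEpsilon.
From mathcomp Require Import all_boot.
Set Implicit Arguments. Unset Strict Implicit. Unset Printing Implicit Defensive.

Definition is_complex (n : nat) (K : {set {set 'I_n}}) : Prop :=
  K != set0 /\ forall F G : {set 'I_n}, F \in K -> G \subset F -> G \in K.

Definition nice (n : nat) (K : {set {set 'I_n}}) : Prop :=
  forall F : {set 'I_n}, (F \in K) (+) (~: F \in K).

Section Join.
Variables (s : nat) (ns : 'I_s -> nat) (K : forall i : 'I_s, {set {set 'I_(ns i)}}).

Definition jtype : finType := {i : 'I_s & 'I_(ns i)}.

Definition fiber (i : 'I_s) (F : {set jtype}) : {set 'I_(ns i)} :=
  [set x | Tagged (fun j => 'I_(ns j)) x \in F].

(* Simplices of K_1 * ... * K_s: disjoint unions of simplices F_i in K_i. *)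
Definition join : {set {set jtype}} :=
  [set F : {set jtype} | [forall i, fiber i F \in K i]].

Definition join_vertices : {set jtype} := [set v | [set v] \in join].

Definition join_dim_eq (d : nat) : Prop :=
  (exists2 F, F \in join & #|F| = d.+1) /\ (forall F, F \in join -> #|F| <= d.+1).

Definition join_edges (d : nat) : {set {set jtype}} :=
  [set F in join | #|F| == d.+1].
End Join.

Definition contains_copy (V : finType) (VS : {set V}) (E : {set {set V}})
  (n : nat) (H : {set {set 'I_n}}) : Prop :=
  exists f : V -> 'I_n, {in VS &, injective f} /\ (forall e, e \in E -> f @: e \in H).

Definition Fd_free (d n : nat) (H : {set {set 'I_n}}) : Prop :=
  forall (s : nat) (ns : 'I_s -> nat) (K : forall i : 'I_s, {set {set 'I_(ns i)}}),
    1 <= s ->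
    (forall i, is_complex (K i)) ->
    (forall i, nice (K i)) ->
    join_dim_eq K d ->
    \sum_(i < s) ns i = d.*2 + s + 2 ->
    ~ contains_copy (join_vertices K) (join_edges K d) H.

Definition uniform (k n : nat) (H : {set {set 'I_n}}) : bool :=
  [forall e in H, #|e| == k].

Definition Fd_freeb (d n : nat) (H : {set {set 'I_n}}) : bool :=
  if excluded_middle_informative (@Fd_free d n H) then true else false.

Definition ex_Fd (d n : nat) : nat :=
  \max_(H : {set {set 'I_n}} | uniform d.+1 H && Fd_freeb d H) #|H|.

(* Main.v *)
Require Import Defs.
From Stdlib Require Import ClassicalEpsilon.
From mathcomp Require Import all_boot zify.
Set Implicit Arguments. Unset Strict Implicit. Unset Printing Implicit Defensive.

Lemma exists_subset_card (T : finType) (B : {set T}) k :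
  k <= #|B| -> exists A : {set T}, A \subset B /\ #|A| = k.
Proof.
move=> hk.
have : 0 < #|[set A : {set T} | A \subset B & #|A| == k]|.
  by rewrite cards_draws bin_gt0.
move/card_gt0P => [A]; rewrite inE => /andP[h1 /eqP h2]; by exists A.
Qed.

Section Cplx.
Variables (n : nat) (K : {set {set 'I_n}}).
Hypotheses (hc : is_complex K) (hn : nice K).

Definition amax := \max_(F in K) #|F|.

Lemma amax_ub (F : {set 'I_n}) : F \in K -> #|F| <= amax.
Proof. by move=> h; rewrite /amax (bigD1 F h) /=; apply: leq_maxl. Qed.

Lemma amax_ex : exists2 F, F \in K & #|F| = amax.
Proof.
have : 0 < #|K| by rewrite card_gt0; case: hc.
move/(eq_bigmax_cond (fun F : {set 'I_n} => #|F|)) => [F hF e].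
by exists F.
Qed.

Lemma set0_in : set0 \in K.
Proof.
case: hc => /set0Pn [F hF] hcl; apply: (hcl F) => //; exact: sub0set.
Qed.

Lemma n_le : n <= amax.*2.+1.
Proof.
rewrite leqNgt; apply/negP => hlt.
have hk : amax.+1 <= #|[set: 'I_n]|.
  by rewrite cardsT card_ord; rewrite -addnn in hlt; lia.
have [G [_ hG]] := exists_subset_card hk.
have := hn G.
have nG : G \notin K by apply/negP => /amax_ub; rewrite hG ltnn.
have nG' : ~: G \notin K.
  apply/negP => /amax_ub => h; have := cardsC G; rewrite card_ord hG.
  rewrite -addnn in hlt; lia.
by rewrite (negbTE nG) (negbTE nG').
Qed.

Lemma all_small (G : {set 'I_n}) : n = amax.*2.+1 -> #|G| <= amax -> G \in K.
Proof.
move=> en hG.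
have nG' : ~: G \notin K.
  apply/negP => /amax_ub => h; have := cardsC G; rewrite card_ord => h2.
  rewrite -addnn in en; lia.
by have := hn G; rewrite (negbTE nG') addbF.
Qed.

Lemma amax0 (F : {set 'I_n}) : amax = 0 -> F \in K -> F = set0.
Proof. by move=> h /amax_ub; rewrite h leqn0 cards_eq0 => /eqP. Qed.

End Cplx.

Lemma Tagged_inj (I : eqType) (T_ : I -> eqType) (i : I) :
  injective (Tagged T_ (i:=i)).
Proof. move=> x y e; apply/eqP; have := @eq_Tagged _ _ (Tagged T_ x) y; move=> /= <-; by rewrite e. Qed.

Lemma card_bigcup_le (T I : finType) (P : pred I) (F : I -> {set T}) :
  #|\bigcup_(i | P i) F i| <= \sum_(i | P i) #|F i|.
Proof.
elim/big_rec2: _ => [|i x y _ h]; first by rewrite cards0.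
by apply: leq_trans (leq_card_setU _ _) _; rewrite leq_add2l.
Qed.

Lemma sum_eq_termwise (I : finType) (f g : I -> nat) :
  (forall i, f i <= g i) -> \sum_i f i = \sum_i g i -> forall i, f i = g i.
Proof.
move=> hle hs i; apply/eqP; rewrite eqn_leq hle /=; rewrite leqNgt; apply/negP => hlt.
move: hs; rewrite (bigD1 i) //= [in RHS](bigD1 i) //= => hs.
have : \sum_(j | j != i) f j <= \sum_(j | j != i) g j by apply: leq_sum => j _.
lia.
Qed.

Section JoinS.
Variables (s : nat) (ns : 'I_s -> nat) (K : forall i : 'I_s, {set {set 'I_(ns i)}}).
Hypotheses (hc : forall i, is_complex (K i)) (hn : forall i, nice (K i)).

Notation jT := (jtype ns).

Lemma card_fibers (F : {set jT}) : #|F| = \sum_i #|fiber i F|.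
Proof.
rewrite -sum1_card (partition_big (fun x : jT => tag x) predT) //=.
apply: eq_bigr => i _.
rewrite sum1_card.
rewrite -(card_imset (fiber i F) (@Tagged_inj _ (fun j => 'I_(ns j)) i)).
apply: eq_card => x /=; rewrite [in LHS]unfold_in /=.
apply/andP/imsetP.
  case=> hx /eqP ei; subst i; exists (tagged x); first by rewrite inE; case: x hx.
  by case: x {hx}.
by case=> y; rewrite inE => hy ->.
Qed.

Definition bigF (G : forall i, {set 'I_(ns i)}) : {set jT} :=
  [set x : jT | tagged x \in G (tag x)].

Lemma fiber_bigF G i : fiber i (bigF G) = G i.
Proof. by apply/setP => y; rewrite !inE. Qed.

Definition a i := amax (K i).

Lemma join_fiber F i : F \in join K -> fiber i F \in K i.
Proof. by rewrite inE => /forallP. Qed.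

Lemma sum_a d : join_dim_eq K d -> \sum_i a i = d.+1.
Proof.
case=> [[F hF eF] hub]; apply/eqP; rewrite eqn_leq; apply/andP; split.
  have G_ex i : exists G : {set 'I_(ns i)}, (G \in K i) && (#|G| == a i).
    by case: (amax_ex (hc i)) => G h1 h2; exists G; rewrite h1 h2 eqxx.
  pose G i := xchoose (G_ex i).
  have hG i : (G i \in K i) && (#|G i| == a i) := xchooseP (G_ex i).
  have hin : bigF G \in join K.
    by rewrite inE; apply/forallP => i; rewrite fiber_bigF; case/andP: (hG i).
  have := hub _ hin; rewrite card_fibers.
  rewrite (eq_bigr (fun i => a i)) // => i _; rewrite fiber_bigF.
  by case/andP: (hG i) => _ /eqP.
rewrite -eF card_fibers; apply: leq_sum => i _.
by apply: amax_ub; apply: join_fiber.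
Qed.


Lemma ns_le i : ns i <= (a i).*2.+1.
Proof. by apply: n_le; apply: hn. Qed.

Lemma ns_eq d : join_dim_eq K d -> \sum_(i < s) ns i = d.*2 + s + 2 ->
  forall i, ns i = (a i).*2.+1.
Proof.
move=> hd hs; apply: sum_eq_termwise; first exact: ns_le.
rewrite hs (eq_bigr (fun i => 2 * a i + 1)); last by move=> i _; lia.
rewrite big_split /= -big_distrr /= (sum_a hd) sum1_card card_ord; lia.
Qed.

Lemma fiber_single i (y : 'I_(ns i)) :
  fiber i [set Tagged (fun j => 'I_(ns j)) y] = [set y].
Proof.
apply/setP => z; rewrite !inE; apply/eqP/eqP; last by move->.
exact: Tagged_inj.
Qed.

Lemma card_vertices d : join_dim_eq K d -> #|join_vertices K| <= 3 * d.+1.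
Proof.
move=> hd; rewrite card_fibers -(sum_a hd) big_distrr /=; apply: leq_sum => i _.
have hy y : y \in fiber i (join_vertices K) -> [set y] \in K i.
  rewrite !inE => /forallP /(_ i); by rewrite fiber_single.
case: (posnP (a i)) => [a0|apos].
  rewrite a0 muln0 leqn0 cards_eq0; apply/eqP/setP => y; rewrite in_set0.
  apply/negbTE/negP => /hy /amax_ub; by rewrite cards1 -/(a i) a0.
apply: leq_trans (max_card _) _; rewrite card_ord.
apply: leq_trans (ns_le i) _; lia.
Qed.

Lemma bin_lb m : 3 ^ m <= 'C(m.*2.+1, m).
Proof.
elim: m => [|m ih] //.
have e1 : (m.+1).*2.+1 = (m.*2.+2).+1 by rewrite doubleS.
rewrite e1 binS binS.
have e2 : 'C(m.*2.+1, m.+1) = 'C(m.*2.+1, m).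
  have hm : m <= m.*2.+1 by rewrite -addnn; lia.
  have := bin_sub hm.
  by have -> : m.*2.+1 - m = m.+1 by rewrite -addnn; lia.
have e3 : 'C(m.*2.+1, m) <= 'C(m.*2.+2, m) by apply: leq_bin2l.
rewrite e2 expnS; lia.
Qed.

Lemma card_edges d : join_dim_eq K d -> \sum_(i < s) ns i = d.*2 + s + 2 ->
  3 ^ d.+1 <= #|join_edges K d|.
Proof.
move=> hd hs.
pose P := fun i : 'I_s => [pred G : {set 'I_(ns i)} | #|G| == a i].
pose phi := fun g : {dffun forall i : 'I_s, {set 'I_(ns i)}} => bigF (fun i => g i).
have phi_inj : injective phi.
  move=> g1 g2 e; apply/ffunP => i.
  by rewrite -(fiber_bigF (fun i => g1 i)) -(fiber_bigF (fun i => g2 i)) -/(phi _) e.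
have sub : phi @: family P \subset join_edges K d.
  apply/subsetP => F /imsetP [g /familyP hg ->]; rewrite inE; apply/andP; split.
    rewrite inE; apply/forallP => i; rewrite fiber_bigF.
    apply: all_small; [exact: hn | exact: ns_eq hd hs i|].
    by have := hg i; rewrite inE => /eqP ->.
  rewrite card_fibers -(sum_a hd); apply/eqP; apply: eq_bigr => i _.
  by rewrite fiber_bigF; have := hg i; rewrite inE => /eqP.
apply: leq_trans (subset_leq_card sub); rewrite card_imset //.
rewrite card_family foldrE big_image /= -(sum_a hd) expn_sum.
apply: leq_prod => i _.
have -> : #|P i| = 'C(ns i, a i).
  have := card_draws 'I_(ns i) (a i); rewrite card_ord => <-.
  by apply: eq_card => G; rewrite inE.
rewrite (ns_eq hd hs i); exact: bin_lb.
Qed.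

End JoinS.

Lemma edge_sub_vertices (s : nat) (ns : 'I_s -> nat)
  (K : forall i : 'I_s, {set {set 'I_(ns i)}}) (hc : forall i, is_complex (K i)) d e :
  e \in join_edges K d -> e \subset join_vertices K.
Proof.
rewrite inE => /andP [he _]; apply/subsetP => x hx; rewrite inE inE.
apply/forallP => i; have := join_fiber i he; case: (hc i) => _ hcl h.
apply: hcl h _; apply/subsetP => y; rewrite !inE => /eqP ->; exact: hx.
Qed.

Lemma copy_dense d n (H : {set {set 'I_n}}) (s : nat) (ns : 'I_s -> nat)
  (K : forall i : 'I_s, {set {set 'I_(ns i)}}) :
  (forall i, is_complex (K i)) -> (forall i, nice (K i)) ->
  join_dim_eq K d -> \sum_(i < s) ns i = d.*2 + s + 2 ->
  contains_copy (join_vertices K) (join_edges K d) H ->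
  exists U : {set 'I_n}, #|U| <= 3 * d.+1 /\ 3 ^ d.+1 <= #|[set e in H | e \subset U]|.
Proof.
move=> hc hn hd hs [f [finj fE]].
exists (f @: join_vertices K); split.
  apply: leq_trans (leq_imset_card _ _) _; exact: card_vertices hd.
apply: leq_trans (card_edges hc hn hd hs) _.
have inj : {in join_edges K d &, injective (fun e : {set jtype ns} => f @: e)}.
  move=> e1 e2 h1 h2 ee.
  have s1 := edge_sub_vertices hc h1; have s2 := edge_sub_vertices hc h2.
  have key (x y : {set jtype ns}) : x \subset join_vertices K -> y \subset join_vertices K ->
      f @: x = f @: y -> x \subset y.
    move=> sx sy exy; apply/subsetP => z hz.
    have : f z \in f @: y by rewrite -exy; apply: imset_f.
    case/imsetP => w hw ew.
    by rewrite (finj z w (subsetP sx _ hz) (subsetP sy _ hw) ew).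
  apply/eqP; rewrite eqEsubset; apply/andP; split; [exact: key | exact: key].
rewrite -(card_in_imset inj); apply: subset_leq_card; apply/subsetP => F.
case/imsetP => e he ->; rewrite inE fE // andTb.
by apply: imsetS; apply: edge_sub_vertices hc _ _ he.
Qed.

Lemma bin_ratio N m E : E <= m -> m <= N -> 'C(N - E, m - E) * N ^ E <= 'C(N, m) * m ^ E.
Proof.
move=> hE hm; elim: E hE => [|E ih] hE; first by rewrite !subn0 !expn0.
have ih' := ih (ltnW hE).
set X := 'C(N - E.+1, m - E.+1); set Y := 'C(N - E, m - E).
have hd : (N - E) * X = (m - E) * Y.
  have := mul_bin_diag (N - E) (m - E.+1).
  have -> : (N - E).-1 = N - E.+1 by lia.
  by have -> : (m - E.+1).+1 = m - E by lia.
have h1 : (m - E) * N <= m * (N - E).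
  rewrite mulnBl mulnBr [m * N]mulnC; apply: leq_sub2l; rewrite mulnC; apply: leq_mul => //.
have h3 : Y * ((m - E) * N) <= Y * (m * (N - E)) by apply: leq_mul.
have h2 : X * N <= Y * m.
  rewrite -(@leq_pmul2r (N - E)); last by lia.
  have -> : X * N * (N - E) = Y * ((m - E) * N).
    by rewrite mulnA -[Y * _]mulnC -hd; lia.
  by apply: leq_trans h3 _; rewrite mulnA.
rewrite !expnS mulnA.
apply: leq_trans (_ : Y * m * N ^ E <= _); first by apply: leq_mul.
have -> : Y * m * N ^ E = m * (Y * N ^ E) by lia.
have -> : 'C(N, m) * (m * m ^ E) = m * ('C(N, m) * m ^ E) by lia.
by apply: leq_mul.
Qed.

Section Del.
Variables (X : finType) (A : {set X}) (BB : {set {set X}}) (E m : nat).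
Hypotheses (hE : 0 < E) (hEm : E <= m) (hmA : m <= #|A|)
  (hBB : forall S, S \in BB -> (S \subset A) && (#|S| == E)).

Definition Ys := [set Y : {set X} | (Y \subset A) && (#|Y| == m)].
Definition bad (Y : {set X}) := [set S in BB | S \subset Y].

Lemma card_Ys : #|Ys| = 'C(#|A|, m).
Proof. by rewrite -cards_draws; apply: eq_card => Y; rewrite !inE. Qed.

Lemma count_sup S : S \in BB -> #|[set Y in Ys | S \subset Y]| <= 'C(#|A| - E, m - E).
Proof.
move=> hS; have /andP [sA /eqP cS] := hBB hS.
have inj : {in [set Y in Ys | S \subset Y] &, injective (fun Y => Y :\: S)}.
  move=> Y1 Y2; rewrite !inE => /andP [_ h1] /andP [_ h2] e.
  apply/setP => x; case: (boolP (x \in S)) => hx.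
    by rewrite (subsetP h1 _ hx) (subsetP h2 _ hx).
  have := congr1 (fun Z : {set X} => x \in Z) e; by rewrite /= !inE hx.
rewrite -(card_in_imset inj).
have -> : #|A| - E = #|A :\: S| by rewrite cardsD (setIidPr sA) cS.
rewrite -cards_draws; apply: subset_leq_card; apply/subsetP => Z.
case/imsetP => Y; rewrite !inE => /andP [/andP [YA /eqP cY] SY] ->.
rewrite setSD //= cardsD (setIidPr SY) cY cS eqxx.
by [].
Qed.


Lemma sum_bad : \sum_(Y in Ys) #|bad Y| <= #|BB| * 'C(#|A| - E, m - E).
Proof.
rewrite (eq_bigr (fun Y : {set X} => \sum_(S : {set X} | (S \in BB) && (S \subset Y)) 1)); last first.
  by move=> Y _; rewrite sum1_card; apply: eq_card => S; rewrite !inE.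
rewrite (exchange_big_dep (mem BB)) /=; last by move=> Y S _ /andP[].
rewrite -sum_nat_const; apply: leq_sum => S hS.
apply: leq_trans (count_sup hS); rewrite sum1_card; apply: subset_leq_card.
by apply/subsetP => Y; rewrite unfold_in /= !inE => /and3P [-> _ ->].
Qed.

Lemma deletion : exists H : {set X}, H \subset A /\
  (forall S, S \in BB -> ~~ (S \subset H)) /\
  m * #|A| ^ E <= #|H| * #|A| ^ E + #|BB| * m ^ E.
Proof.
have Ypos : 0 < #|Ys| by rewrite card_Ys bin_gt0.
have [Y0 hY0] := card_gt0P Ypos.
case: (arg_minnP (fun Y => #|bad Y|) hY0) => Y hY hmin.
have hsum : #|Ys| * #|bad Y| <= #|BB| * 'C(#|A| - E, m - E).
  apply: leq_trans sum_bad; rewrite -sum_nat_const; apply: leq_sum => Y' hY'.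
  exact: hmin.
pose R := \bigcup_(S in bad Y) (if [pick x in S] is Some x then [set x] else set0).
have cR : #|R| <= #|bad Y|.
  apply: leq_trans (card_bigcup_le _ _) _; rewrite -sum1_card; apply: leq_sum => S _.
  by case: pickP => [x _|_]; rewrite ?cards1 ?cards0.
have hY1 : Y \in Ys := hY. move: hY1; rewrite inE => /andP [YA /eqP cY].
exists (Y :\: R); split; first by apply: subset_trans (subsetDl _ _) YA.
split.
  move=> S hS; apply/negP => SH.
  have SY : S \subset Y by apply: subset_trans SH (subsetDl _ _).
  have Sb : S \in bad Y by rewrite inE hS SY.
  case e: [pick x in S] => [x|].
    have hx : x \in S by move: e; case: pickP => // y hy [<-].
    have xR : x \in R by apply/bigcupP; exists S => //; rewrite e inE.
    by have := subsetP SH _ hx; rewrite inE xR.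
  have h0 : forall x, (x \in S) = false by move: e; case: pickP.
  have /andP [_ /eqP cS] := hBB hS.
  have : #|S| == 0 by rewrite cards_eq0; apply/eqP/setP => x; rewrite inE h0.
  by rewrite cS; case: E hE.
have cH : m <= #|Y :\: R| + #|bad Y|.
  rewrite cardsD cY; have : #|Y :&: R| <= #|R| by apply: subset_leq_card; apply: subsetIr.
  lia.
have hb := bin_ratio hEm hmA.
rewrite card_Ys in hsum.
set C0 := 'C(#|A|, m) in hsum hb; set c := 'C(_ - _, _) in hsum hb.
have Cpos : 0 < C0 by rewrite /C0 bin_gt0.
have key : #|bad Y| * #|A| ^ E <= #|BB| * m ^ E.
  rewrite -(@leq_pmul2l C0) //.
  apply: leq_trans (_ : #|BB| * c * #|A| ^ E <= _).
    by rewrite mulnA; apply: leq_mul.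
  have -> : C0 * (#|BB| * m ^ E) = #|BB| * (C0 * m ^ E) by lia.
  by rewrite -mulnA; apply: leq_mul.
apply: leq_trans (_ : (#|Y :\: R| + #|bad Y|) * #|A| ^ E <= _).
  by apply: leq_mul.
by rewrite mulnDl leq_add2l.
Qed.

End Del.

Lemma ffact_le_exp n w : n ^_ w <= n ^ w.
Proof.
elim: w => [|w ih] //; rewrite ffactnSr expnSr; apply: leq_mul => //; exact: leq_subr.
Qed.

Lemma bin_le_exp n w : 'C(n, w) <= n ^ w.
Proof.
apply: leq_trans (ffact_le_exp n w); rewrite -bin_ffact; apply: leq_pmulr.
exact: fact_gt0.
Qed.

Section Main.
Variables (d n m : nat).
Let k := d.+1.
Let w := 3 * k.
Let E := 3 ^ k.
Definition Aset : {set {set 'I_n}} := [set e : {set 'I_n} | #|e| == k].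
Definition BBset : {set {set {set 'I_n}}} :=
  [set S : {set {set 'I_n}} | [&& S \subset Aset, #|S| == E &
     [exists U : {set 'I_n}, (#|U| == w) && (S \subset powerset U)]]].

Lemma card_Aset : #|Aset| = 'C(n, k).
Proof. by rewrite -[n in RHS]card_ord -card_draws. Qed.

Lemma card_BBset : #|BBset| <= n ^ w * 2 ^ (2 ^ w).
Proof.
have sub : BBset \subset \bigcup_(U : {set 'I_n} | #|U| == w) powerset (powerset U).
  apply/subsetP => S; rewrite inE => /and3P [_ _ /existsP [U /andP [hU hS]]].
  by apply/bigcupP; exists U => //; rewrite inE.
apply: leq_trans (subset_leq_card sub) _.
apply: leq_trans (card_bigcup_le _ _) _.
rewrite (eq_bigr (fun _ => 2 ^ (2 ^ w))); last first.
  by move=> U /eqP hU; rewrite !card_powerset hU.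
rewrite sum_nat_const; apply: leq_mul => //.
apply: leq_trans (bin_le_exp n w).
rewrite -[n in 'C(n, _)]card_ord -card_draws; apply: eq_leq; apply: eq_card => U.
by rewrite inE.
Qed.

Lemma free_of_BB (H : {set {set 'I_n}}) : w <= n -> H \subset Aset ->
  (forall S, S \in BBset -> ~~ (S \subset H)) -> Fd_free d H.
Proof.
move=> hw HA hBB s ns K hs hc hn hd hsum hcopy.
have [U0 [cU0 cE]] := copy_dense hc hn hd hsum hcopy.
have hZ : w - #|U0| <= #|~: U0| by have := cardsC U0; rewrite card_ord; lia.
have [Z [ZC cZ]] := exists_subset_card hZ.
pose U := U0 :|: Z.
have cU : #|U| = w.
  rewrite cardsU.
  have -> : U0 :&: Z = set0.
    apply/setP => x; rewrite !inE; apply/negP => /andP [h1 h2].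
    by have := subsetP ZC _ h2; rewrite inE h1.
  rewrite cards0 cZ; rewrite -/k in cU0; lia.
have [S [Ssub cS]] := exists_subset_card cE.
have SH : S \subset H.
  apply: subset_trans Ssub _; apply/subsetP => e; rewrite inE => /andP [].
  by [].
suff hS : S \in BBset by exact: (negP (hBB S hS)) SH.
rewrite inE; apply/and3P; split.
- exact: subset_trans SH HA.
- by rewrite cS.
- apply/existsP; exists U; rewrite cU eqxx /=; apply/subsetP => e /(subsetP Ssub).
  rewrite !inE => /andP [_ h]; apply: subset_trans h _; exact: subsetUl.
Qed.

Lemma ex_lb : w <= n -> E <= m -> m <= 'C(n, k) ->
  m * 'C(n, k) ^ E <= ex_Fd d n * 'C(n, k) ^ E + n ^ w * 2 ^ (2 ^ w) * m ^ E.
Proof.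
move=> hw hE hm.
have hBB : forall S, S \in BBset -> (S \subset Aset) && (#|S| == E).
  by move=> S; rewrite inE => /and3P [-> -> _].
have E0 : 0 < E by rewrite expn_gt0.
rewrite -card_Aset in hm *.
have [H [HA [Hfree Hineq]]] := deletion E0 hE hm hBB.
apply: leq_trans Hineq _; apply: leq_add.
  apply: leq_mul => //.
  have hu : uniform d.+1 H.
    by apply/forall_inP => e /(subsetP HA); rewrite inE.
  have hf : Fd_freeb d H.
    rewrite /Fd_freeb; case: excluded_middle_informative => // hn; exfalso; apply: hn.
    exact: free_of_BB.
  rewrite /ex_Fd; apply: (@leq_bigmax_cond _ (fun H => uniform d.+1 H && Fd_freeb d H) (fun H => #|H|) H).
  by rewrite hu hf.
by apply: leq_mul => //; exact: card_BBset.
Qed.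

End Main.

Lemma ffact_lb n j : j.*2 <= n -> n ^ j <= n ^_ j * 2 ^ j.
Proof.
elim: j => [|j ih] h //.
have ih' : n ^ j <= n ^_ j * 2 ^ j by apply: ih; rewrite -!addnn in h *; lia.
have h2 : n <= (n - j) * 2 by rewrite -!addnn in h *; lia.
have := leq_mul ih' h2.
have -> : n ^_ j.+1 * 2 ^ j.+1 = n ^_ j * 2 ^ j * ((n - j) * 2).
  by rewrite ffactnSr expnSr; lia.
by rewrite expnSr.
Qed.

Lemma bin_lb2 n k : k.*2 <= n -> n ^ k <= 'C(n, k) * (2 ^ k * k`!).
Proof.
move=> h; apply: leq_trans (ffact_lb h) _.
by rewrite -bin_ffact [2 ^ k * _]mulnC mulnA.
Qed.

Lemma nat_main d n m :
  let k := d.+1 in let w := 3 * k in let E := 3 ^ k in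
  let c := 2 ^ k * k`! in let D := 2 * 2 ^ (2 ^ w) * c ^ E in
  w <= n -> E <= m -> D * m ^ (E - 1) <= n ^ (k * E - w) -> m <= 2 * ex_Fd d n.
Proof.
move=> k w E c D hw hE hD.
have k2n : k.*2 <= n by rewrite -addnn /w in hw *; lia.
set N := 'C(n, k).
have hN : n ^ k <= N * c by apply: bin_lb2.
have cpos : 0 < c by rewrite muln_gt0 expn_gt0 fact_gt0.
have npos : 0 < n by rewrite /w in hw; lia.
have Npos : 0 < N by rewrite bin_gt0; rewrite /w in hw; lia.
have E1 : 1 <= E - 1.
  have : 3 <= E by rewrite /E /k expnS; have := expn_gt0 3 d; lia.
  lia.
have eE : E = (E - 1).+1 by rewrite subn1 prednK //; rewrite /E expn_gt0.
have wk : w <= k * E.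
  rewrite /w /E /k [_ * 3 ^ _]mulnC; apply: leq_mul => //.
  by rewrite expnS; have := expn_gt0 3 d; lia.
have hmN : m <= N.
  have h1 : (m * c) ^ (E - 1) <= (N * c) ^ (E - 1).
    rewrite expnMn.
    apply: leq_trans (_ : D * m ^ (E - 1) <= _).
      rewrite [m ^ _ * _]mulnC; apply: leq_mul => //.
      rewrite /D; apply: leq_trans (_ : c ^ E <= _).
        by apply: leq_pexp2l => //; lia.
      by rewrite leq_pmull // muln_gt0 expn_gt0.
    apply: leq_trans hD _.
    apply: leq_trans (_ : n ^ (k * (E - 1)) <= _).
      by apply: leq_pexp2l => //; rewrite /w; lia.
    by rewrite expnM expnMn -expnMn leq_exp2r //; lia.
  move: h1; rewrite leq_exp2r; last by lia.
  by rewrite leq_pmul2r.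
have hlb := ex_lb hw hE hmN.
rewrite -/N -/w -/E -/k in hlb.
have hNE : 2 * 2 ^ (2 ^ w) * n ^ w * m ^ (E - 1) <= N ^ E.
  rewrite -(@leq_pmul2r (c ^ E)); last by rewrite expn_gt0 cpos.
  rewrite -expnMn.
  apply: leq_trans (_ : n ^ (k * E) <= _); last first.
    by rewrite expnM leq_exp2r //; lia.
  rewrite -(subnKC wk) expnD.
  have h5 : n ^ w * (D * m ^ (E - 1)) <= n ^ w * n ^ (k * E - w) by rewrite leq_mul2l hD orbT.
  apply: (leq_trans _ h5); rewrite /D; apply: eq_leq; lia.
have h3 : 2 * 2 ^ (2 ^ w) * n ^ w * m ^ E <= m * N ^ E.
  have eM : m ^ E = m * m ^ (E - 1) by rewrite {1}eE expnS.
  rewrite eM.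
  have h6 := leq_mul (leqnn m) hNE; apply: (leq_trans _ h6); apply: eq_leq; lia.
have h4 : m * N ^ E <= 2 * ex_Fd d n * N ^ E.
  have : 2 * (m * N ^ E) <= 2 * (ex_Fd d n * N ^ E + n ^ w * 2 ^ (2 ^ w) * m ^ E).
    by rewrite leq_mul2l hlb orbT.
  lia.
by move: h4; rewrite leq_pmul2r // expn_gt0 Npos.
Qed.

Lemma pack d : 0 < d -> exists D N0, 0 < D /\ forall n, N0 <= n -> 0 < n /\
  exists M, M <= 4 * D * ex_Fd d n /\
    n ^ (d.+1 * 3 ^ d.+1 - 3 * d.+1) < M ^ (3 ^ d.+1 - 1).
Proof.
move=> hd.
set k := d.+1.
set w := 3 * k.
set E := 3 ^ k.
set c := 2 ^ k * k`!.
set D := 2 * 2 ^ (2 ^ w) * c ^ E.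
have cpos : 0 < c by rewrite /c muln_gt0 expn_gt0 fact_gt0.
have Dpos : 0 < D by rewrite /D muln_gt0 (expn_gt0 c) cpos muln_gt0 expn_gt0.
have E9 : 9 <= E.
  rewrite /E /k; have -> : d = d.-1.+1 by lia.
  by rewrite !expnS; have := expn_gt0 3 d.-1.-1; lia.
set a := k * E - w.
have a1 : 1 <= a.
  rewrite /a /w; have : k * 3 < k * E by rewrite ltn_mul2l; lia.
  lia.
exists D, (w + D * E ^ (E - 1)); split => // n hn.
have npos : 0 < n by lia.
split => //.
pose P := fun j : nat => D * j ^ (E - 1) <= n ^ a.
have P0 : P 0 by rewrite /P exp0n ?muln0 //; lia.
have Pub : forall j, P j -> j <= n ^ a.
  move=> j; rewrite /P => hj; apply: leq_trans hj.
  case: (posnP j) => [->|jp] //.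
  apply: leq_trans (_ : j ^ (E - 1) <= _).
    by rewrite -{1}(expn1 j); apply: leq_pexp2l => //; lia.
  by rewrite leq_pmull.
case: (ex_maxnP (ex_intro (fun j => P j) 0 P0) Pub) => m Pm mmax.
have PE : P E.
  rewrite /P; apply: leq_trans (_ : n <= _); first by lia.
  by rewrite -{1}(expn1 n); apply: leq_pexp2l.
have hEm : E <= m := mmax _ PE.
have hm2 := @nat_main d n m (leq_trans (leq_addr _ _) hn) hEm Pm.
have nP : ~~ P m.+1 by apply/negP => /mmax; rewrite ltnn.
exists (D * m.+1); split.
  rewrite [4 * D]mulnC -mulnA; apply: leq_mul => //; lia.
rewrite ltnNge; apply/negP => h; move/negP: nP; apply; rewrite /P.
apply: leq_trans h; rewrite expnMn leq_mul2r; apply/orP; right.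
by rewrite -{1}(expn1 D); apply: leq_pexp2l => //; lia.
Qed.

Lemma powE m j : Nat.pow m j = expn m j.
Proof. by elim: j => [|j ih] //=; rewrite expnS ih. Qed.

Lemma side1 d : (3 * d.+1 <= d.+1 * 3 ^ d.+1)%N.
Proof. rewrite mulnC leq_mul2l expnS; apply/orP; right; by rewrite leq_pmulr ?expn_gt0. Qed.
Lemma side2 d : (1 <= 3 ^ d.+1)%N.
Proof. by rewrite expn_gt0. Qed.

Unset Implicit Arguments.
From Stdlib Require Import Reals Lra.
Open Scope R_scope.

Lemma INR_expn m j : INR (expn m j) = INR m ^ j.
Proof.
elim: j => [|j ih]; first by rewrite expn0.
by rewrite expnS mult_INR ih /=.
Qed.

Theorem corollary3p17 (d : nat) (hd : (1 <= d)%nat) :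
  exists C : R, 0 < C /\
  exists N : nat, forall n : nat, (N <= n)%nat ->
    C * Rpower (INR n)
      (INR (d + 1) - 2 * INR (d + 1) / (INR (3 ^ (d + 1)) - 1))
    <= INR (ex_Fd d n).
Proof.
have hd' : leq 1 d := hd.
have [D [N0 [Dpos hN]]] := pack hd'.
have ek : addn d 1 = d.+1 by rewrite addn1.
rewrite ek powE.
have hD : 0 < INR D by apply: (lt_INR 0 D); apply/ltP.
exists (/ (4 * INR D)); split.
  apply: Rinv_0_lt_compat; lra.
exists N0 => n hn.
have [npos [M [hM hlt]]] := hN n hn.
set E := expn 3 d.+1.
have E3 : 3 <= INR E.
  have : leq 3 E by rewrite /E expnS leq_pmulr // expn_gt0.
  move=> h; have := le_INR _ _ (elimT leP h).
  have -> : INR 3 = 3 by simpl; lra.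
  by [].
set al := INR d.+1 - 2 * INR d.+1 / (INR E - 1).
set Y := Rpower (INR n) al.
have Ypos : 0 < Y by rewrite /Y /Rpower; apply: exp_pos.
have nRpos : 0 < INR n by apply: (lt_INR 0 n); apply/ltP.
have eal : al * INR (subn E 1) = INR (subn (muln d.+1 E) (muln 3 d.+1)).
  rewrite minus_INR; last by apply/leP; apply: side2.
  rewrite minus_INR; last by apply/leP; apply: side1.
  rewrite !mult_INR /al.
  have i1 : INR 1 = 1 by reflexivity.
  have i3 : INR 3 = 3 by simpl; lra.
  rewrite ?i1 ?i3.
  field; lra.
have hY : Y ^ (subn E 1) = INR (expn n (subn (muln d.+1 E) (muln 3 d.+1))).
  by rewrite -(Rpower_pow _ _ Ypos) /Y Rpower_mult eal Rpower_pow // INR_expn.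
have hYM : Y < INR M.
  apply: Rnot_le_lt => hle.
  have h1 : INR M ^ (subn E 1) <= Y ^ (subn E 1).
    apply: pow_incr; split => //; apply: pos_INR.
  rewrite hY -INR_expn in h1.
  have h2 := INR_le _ _ h1; move/leP: h2 => h2.
  by move: (leq_ltn_trans h2 hlt); rewrite ltnn.
have hle : INR M <= 4 * INR D * INR (ex_Fd d n).
  have := le_INR _ _ (elimT leP hM) => h.
  have i4 : INR 4 = 4 by simpl; lra.
  by rewrite !mult_INR i4 in h.
apply: (Rmult_le_reg_l (4 * INR D)); first lra.
rewrite -Rmult_assoc Rinv_r; last lra.
lra.
Qed.
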